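(* Let $p\ge 3$ be an integer, $w=2\cos(\pi/p)$, and for real $S$ set $$X_S=\begin{pmatrix}0&-e^{S/2}\\ e^{-S/2}&0\end{pmatrix},\quad R=\begin{pmatrix}1&1\\-1&0\end{pmatrix},\quad L=\begin{pmatrix}0&1\\-1&-1\end{pmatrix},\quad F_p=\begin{pmatrix}0&1\\-1&-w\end{pmatrix}.$$ Let $Z\in\mathbb R$ and define $e^{Z_1}=e^Z\frac{\sin(2\pi/p)}{\sin(\pi/p)}$, $e^{Z_p}=e^Z\frac{\sin(\pi/p)}{\sin(2\pi/p)}$, $e^{Z_k}=e^Z\frac{\sin((k-1)\pi/p)}{\sin(k\pi/p)}$ for $k=2,\dots,p-1$, and $e^{Y_k}=\frac{\sin((k+1)\pi/p)}{\sin((k-1)\pi/p)}$ for $k=2,\dots,p-2$. Then $$X_ZF_pX_Z=X_{Z_1}LX_{Z_2},$$ for every $k=2,\dots,p-2$ $$X_Z(-1)^{k-1}F_p^{k}X_Z=X_{Z_1}RX_{Y_2}R\cdots RX_{Y_k}LX_{Z_{k+1}},$$ and $$X_Z(-1)^{p}F_p^{p-1}X_Z=X_{Z_1}RX_{Y_2}R\cdots RX_{Y_{p-2}}RX_{Z_p}$$ (for $p=3$ the right-hand side of the last identity is $X_{Z_1}RX_{Z_3}$). *)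

(* Defs.v *)
From HB Require Import structures.
From mathcomp Require Import all_boot all_order all_algebra.
From mathcomp Require Import all_classical all_reals all_analysis.
Set Implicit Arguments.
Unset Strict Implicit.
Unset Printing Implicit Defensive.
Import Order.TTheory GRing.Theory Num.Theory.
Local Open Scope ring_scope.

Section Defs.
Variable R : realType.

Definition mx2 (a b c d : R) : 'M[R]_2 :=
  \matrix_(i < 2, j < 2)
    if (i : nat) == 0%N then (if (j : nat) == 0%N then a else b)
    else (if (j : nat) == 0%N then c else d).

Definition Xmx (S : R) : 'M[R]_2 := mx2 0 (- expR (S / 2)) (expR (- (S / 2))) 0.
Definition Rmx : 'M[R]_2 := mx2 1 1 (-1) 0.
Definition Lmx : 'M[R]_2 := mx2 0 1 (-1) (-1).
Definition wp (p : nat) : R := 2 * cos (pi / p%:R).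
Definition Fmx (p : nat) : 'M[R]_2 := mx2 0 1 (-1) (- wp p).

Definition sinpi (p k : nat) : R := sin (k%:R * pi / p%:R).

Definition Z1 (p : nat) (Z : R) : R := Z + ln (sinpi p 2 / sinpi p 1).
Definition Zlast (p : nat) (Z : R) : R := Z + ln (sinpi p 1 / sinpi p 2).
Definition Zk (p : nat) (Z : R) (k : nat) : R :=
  Z + ln (sinpi p k.-1 / sinpi p k).
Definition Yk (p : nat) (k : nat) : R := ln (sinpi p k.+1 / sinpi p k.-1).

(* R X_{Y_2} R X_{Y_3} ... R X_{Y_k}  (empty product = 1 when k < 2) *)
Definition RYprod (p k : nat) : 'M[R]_2 :=
  \prod_(2 <= j < k.+1) (Rmx * Xmx (Yk p j)).

End Defs.

(* Main.v *)
Require Import Defs.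
From HB Require Import structures.
From mathcomp Require Import all_boot all_order all_algebra.
From mathcomp Require Import all_classical all_reals all_analysis.
From mathcomp Require Import ring lra zify.
Import Order.TTheory GRing.Theory Num.Theory.
Local Open Scope ring_scope.
Section Aux.
Variable R : realType.

Lemma mx2_mul (a b c d a' b' c' d' : R) :
  mx2 a b c d * mx2 a' b' c' d' =
  mx2 (a * a' + b * c') (a * b' + b * d') (c * a' + d * c') (c * b' + d * d').
Proof.
apply/matrixP => i j; rewrite !mxE !big_ord_recl big_ord0 !mxE /=.
by move: i j => [[|[|i]] Hi] [[|[|j]] Hj] //=; rewrite ?addr0.
Qed.

Lemma mx2_scale (r a b c d : R) : r *: mx2 a b c d = mx2 (r * a) (r * b) (r * c) (r * d).
Proof.
apply/matrixP => i j; rewrite !mxE /=.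
by move: i j => [[|[|i]] Hi] [[|[|j]] Hj].
Qed.

Lemma mx2_eq (a b c d a' b' c' d' : R) :
  a = a' -> b = b' -> c = c' -> d = d' -> mx2 a b c d = mx2 a' b' c' d'.
Proof. by move=> -> -> -> ->. Qed.

Lemma XmxE (S : R) : Xmx S = mx2 0 (- expR (S / 2)) (expR (S / 2))^-1 0.
Proof. by rewrite /Xmx expRN. Qed.

Definition sq (x : R) := expR (ln x / 2).
Lemma sq_gt0 x : 0 < sq x. Proof. exact: expR_gt0. Qed.
Lemma sq_sqr x : 0 < x -> sq x ^+ 2 = x.
Proof.
move=> hx; rewrite /sq expr2 -expRD -splitr lnK //.
Qed.
Lemma expR_half_div (a b : R) : 0 < a -> 0 < b -> expR (ln (a / b) / 2) = sq a / sq b.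
Proof.
move=> ha hb; rewrite ln_div ?posrE // mulrBl expRB //.
Qed.
Lemma expR_half_add (Z a b : R) : 0 < a -> 0 < b ->
  expR ((Z + ln (a / b)) / 2) = expR (Z / 2) * (sq a / sq b).
Proof.
move=> ha hb; rewrite mulrDl expRD expR_half_div //.
Qed.

Lemma sinD_add_sub (x y : R) : sin (x + y) + sin (x - y) = 2 * sin x * cos y.
Proof. rewrite sinD sinB; ring. Qed.
Lemma sinD_mul_sub (x y : R) : sin (x + y) * sin (x - y) = sin x ^+ 2 - sin y ^+ 2.
Proof.
rewrite sinD sinB.
have h1 := cos2Dsin2 x; have h2 := cos2Dsin2 y.
apply/eqP; rewrite -subr_eq0.
have -> : (sin x * cos y + cos x * sin y) * (sin x * cos y - cos x * sin y) -
  (sin x ^+ 2 - sin y ^+ 2) = sin x ^+ 2 * (cos y ^+ 2 + sin y ^+ 2 - 1)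
   - sin y ^+ 2 * (cos x ^+ 2 + sin x ^+ 2 - 1) by ring.
by rewrite h1 h2 !subrr !mulr0 subrr.
Qed.

Lemma sinpiE (p k : nat) : Defs.sinpi R p k = sin (k%:R * (pi / p%:R) : R).
Proof. by rewrite /Defs.sinpi mulrA. Qed.

Lemma s_pos (p k : nat) : (0 < k)%N -> (k < p)%N -> 0 < Defs.sinpi R p k :> R.
Proof.
move=> hk hkp; rewrite /Defs.sinpi; apply: sin_gt0_pi; apply/andP; split.
  by apply: divr_gt0; [apply: mulr_gt0; rewrite ?ltr0n // pi_gt0 | rewrite ltr0n (leq_trans hk (ltnW hkp))].
have hp : 0 < p%:R :> R by rewrite ltr0n (leq_trans hk (ltnW hkp)).
rewrite ltr_pdivrMr //.
have hk' : k%:R < p%:R :> R by rewrite ltr_nat.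
have := pi_gt0 R; nra.
Qed.

Lemma s0 (p : nat) : Defs.sinpi R p 0 = 0 :> R.
Proof. by rewrite /Defs.sinpi mul0r mul0r sin0. Qed.

Lemma s_shift (p k : nat) :
  Defs.sinpi R p k.+2 = sin ((k.+1)%:R * (pi / p%:R) + pi / p%:R) :> R /\
  Defs.sinpi R p k = sin ((k.+1)%:R * (pi / p%:R) - pi / p%:R) :> R /\
  Defs.sinpi R p 1 = sin (pi / p%:R) :> R.
Proof.
rewrite !sinpiE; split; [|split].
- by congr sin; rewrite -[(k.+2)%:R]natr1; ring.
- by congr sin; rewrite -[(k.+1)%:R]natr1; ring.
- by rewrite mul1r.
Qed.

Lemma s_rec (p k : nat) : Defs.sinpi R p k.+2 + Defs.sinpi R p k = wp R p * Defs.sinpi R p k.+1 :> R.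
Proof.
have [-> [-> _]] := s_shift p k.
by rewrite sinD_add_sub /wp sinpiE; ring.
Qed.

Lemma s_prod (p k : nat) :
  Defs.sinpi R p k.+2 * Defs.sinpi R p k = Defs.sinpi R p k.+1 ^+ 2 - Defs.sinpi R p 1 ^+ 2 :> R.
Proof.
have [-> [-> ->]] := s_shift p k.
by rewrite sinD_mul_sub sinpiE.
Qed.

Lemma s_sym (p j : nat) : (0 < p)%N -> (j <= p)%N -> Defs.sinpi R p (p - j) = Defs.sinpi R p j :> R.
Proof.
move=> hp hj; rewrite /Defs.sinpi natrB //.
have hp' : p%:R != 0 :> R by rewrite pnatr_eq0 -lt0n.
have -> : (p%:R - j%:R) * pi / p%:R = pi - j%:R * pi / p%:R :> R.
  by field.
by rewrite sinB sinpi cospi; ring.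
Qed.

Lemma s_p (p : nat) : (0 < p)%N -> Defs.sinpi R p p = 0 :> R.
Proof.
move=> hp; have hp' : p%:R != 0 :> R by rewrite pnatr_eq0 -lt0n.
by rewrite /Defs.sinpi mulrAC divff // mul1r sinpi.
Qed.

End Aux.
Section Main.
Variable R : realType.
Variable p : nat.
Hypothesis hp : (3 <= p)%N.
Local Notation s := (Defs.sinpi R p).

Lemma s1_gt0 : 0 < s 1. Proof. by apply: s_pos => //; apply: leq_trans hp. Qed.

Lemma Fpow (n : nat) : (-1) ^+ n *: Fmx R p ^+ n.+1 =
  mx2 (s n / s 1) (s n.+1 / s 1) (- s n.+1 / s 1) (- s n.+2 / s 1).
Proof.
have s1n0 : s 1 != 0 by rewrite gt_eqF // s1_gt0.
elim: n => [|n IH].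
  rewrite expr0 scale1r expr1 /Fmx.
  have e : s 2 = wp R p * s 1 - s 0 by rewrite -s_rec; ring.
  rewrite e s0; apply: mx2_eq; field; exact: s1n0.
rewrite exprS exprSr -scalerA scalerAl IH /Fmx mx2_mul mx2_scale.
have e2 : s n.+3 = wp R p * s n.+2 - s n.+1 by rewrite -s_rec; ring.
have e1 : s n.+2 = wp R p * s n.+1 - s n by rewrite -s_rec; ring.
rewrite e2 e1; apply: mx2_eq; field; exact: s1n0.
Qed.


Variable Z : R.
Local Notation z := (expR (Z / 2)).
Local Notation sg j := (sq R (s j)).

Definition Q (k : nat) : 'M[R]_2 :=
  mx2 0 (- (z * sg k * sg k.+1) / s 1) (s 1 / (z * sg k * sg k.+1))
      (- (s k.-1 * sg k * sg k.+1) / (s 1 * s k * z)).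

Lemma spos j : (0 < j)%N -> (j < p)%N -> 0 < s j.
Proof. exact: s_pos. Qed.

Lemma Qlem n : (n.+2 < p)%N -> Xmx (Z1 p Z) * RYprod R p n.+1 = Q n.+1.
Proof.
have s1p := s1_gt0.
have zp : 0 < z := expR_gt0 _.
elim: n => [|n IH] hn.
  have s2p : 0 < s 2 by apply: spos => //; lia.
  rewrite /RYprod big_geq // mulr1 XmxE /Z1 (expR_half_add R Z _ _ s2p s1p) /Q /= s0.
  have h1 := sq_sqr R _ s1p; have h2 := sq_gt0 R (s 1); have h3 := sq_gt0 R (s 2).
  set t1 := sq R (s 1) in h1 h2 *; set t2 := sq R (s 2) in h3 *.
  rewrite -h1.
  by apply: mx2_eq; field; rewrite //= ?(lt0r_neq0 h2, lt0r_neq0 h3, lt0r_neq0 zp).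
have hn' : (n.+2 < p)%N by lia.
rewrite /RYprod big_nat_recr //= mulrA -/(RYprod R p n.+1) IH //.
have sn1 : 0 < s n.+1 by apply: spos => //; lia.
have sn2 : 0 < s n.+2 by apply: spos => //; lia.
have sn3 : 0 < s n.+3 by apply: spos => //; lia.
rewrite XmxE /Yk (expR_half_div R _ _ sn3 sn1) /Q /Rmx /= !mx2_mul.
have en : s n = (s n.+1 ^+ 2 - s 1 ^+ 2) / s n.+2.
  by rewrite -s_prod; field; rewrite lt0r_neq0.
rewrite en.
have h1 := sq_sqr R _ sn1; have h2 := sq_gt0 R (s n.+1).
have h3 := sq_sqr R _ sn2; have h4 := sq_gt0 R (s n.+2).
have h5 := sq_sqr R _ sn3; have h6 := sq_gt0 R (s n.+3).
set t1 := sq R (s n.+1) in h1 h2 *; set t2 := sq R (s n.+2) in h3 h4 *.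
set t3 := sq R (s n.+3) in h5 h6 *.
rewrite -h1 -h3.
by apply: mx2_eq; field; rewrite //= ?(lt0r_neq0 h2, lt0r_neq0 h4, lt0r_neq0 h6, lt0r_neq0 zp, lt0r_neq0 s1p).
Qed.

Lemma midlem n : (n.+2 < p)%N ->
  Xmx Z * ((-1) ^+ n *: Fmx R p ^+ n.+1) * Xmx Z
  = Xmx (Z1 p Z) * RYprod R p n.+1 * Lmx R * Xmx (Zk p Z n.+2).
Proof.
move=> hn.
have s1p := s1_gt0.
have zp : 0 < z := expR_gt0 _.
have sn1 : 0 < s n.+1 by apply: spos => //; lia.
have sn2 : 0 < s n.+2 by apply: spos => //; lia.
rewrite Fpow Qlem // !XmxE /Zk /= (expR_half_add R Z _ _ sn1 sn2) /Q /Lmx /= !mx2_mul.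
have en : s n = (s n.+1 ^+ 2 - s 1 ^+ 2) / s n.+2.
  by rewrite -s_prod; field; rewrite lt0r_neq0.
rewrite en.
have h1 := sq_sqr R _ sn1; have h2 := sq_gt0 R (s n.+1).
have h3 := sq_sqr R _ sn2; have h4 := sq_gt0 R (s n.+2).
set t1 := sq R (s n.+1) in h1 h2 *; set t2 := sq R (s n.+2) in h3 h4 *.
rewrite -h1 -h3.
by apply: mx2_eq; field; rewrite //= ?(lt0r_neq0 h2, lt0r_neq0 h4, lt0r_neq0 zp, lt0r_neq0 s1p).
Qed.

Lemma lastlem :
  Xmx Z * ((-1) ^+ p *: Fmx R p ^+ p.-1) * Xmx Z
  = Xmx (Z1 p Z) * RYprod R p (p - 2) * Rmx R * Xmx (Zlast p Z).
Proof.
have [n ep] : exists n, p = n.+3 by exists (p - 3)%N; lia.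
have s1p := s1_gt0.
have zp : 0 < z := expR_gt0 _.
have s2p : 0 < s 2 by apply: spos => //; lia.
have e1 : (-1 : R) ^+ p = (-1) ^+ n.+1 by rewrite ep !exprS; ring.
rewrite e1 (_ : p.-1 = n.+2); last by lia.
rewrite (_ : (p - 2 = n.+1)%N); last by lia.
have sn1 : 0 < s n.+1 by apply: spos => //; lia.
have sn2 : 0 < s n.+2 by apply: spos => //; lia.
rewrite Fpow Qlem; last by lia.
rewrite !XmxE /Zlast (expR_half_add R Z _ _ s1p s2p) /Q /Rmx /= !mx2_mul.
have en : s n = (s n.+1 ^+ 2 - s 1 ^+ 2) / s n.+2.
  by rewrite -s_prod; field; rewrite lt0r_neq0.
have f1 : s n.+1 = s 2.
  by rewrite -(s_sym R p 2); [congr (Defs.sinpi R p _) | |]; lia.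
have f2 : s n.+2 = s 1.
  by rewrite -(s_sym R p 1); [congr (Defs.sinpi R p _) | |]; lia.
have f3 : s n.+3 = 0 by rewrite -ep; apply: s_p; lia.
rewrite en f3 f2 f1.
have h1 := sq_sqr R _ s1p; have h2 := sq_gt0 R (s 1).
have h3 := sq_sqr R _ s2p; have h4 := sq_gt0 R (s 2).
set t1 := sq R (s 1) in h1 h2 *; set t2 := sq R (s 2) in h3 h4 *.
rewrite -h1 -h3.
by apply: mx2_eq; field; rewrite //= ?(lt0r_neq0 h2, lt0r_neq0 h4, lt0r_neq0 zp).
Qed.

End Main.

Theorem mainTheorem3 (R : realType) (p : nat) (hp : (3 <= p)%N) (Z : R) :
  [/\ Xmx Z * Fmx R p * Xmx Z = Xmx (Z1 p Z) * Lmx R * Xmx (Zk p Z 2),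
      (forall k : nat, (2 <= k)%N -> (k <= p - 2)%N ->
         Xmx Z * ((-1) ^+ k.-1 *: Fmx R p ^+ k) * Xmx Z
         = Xmx (Z1 p Z) * RYprod R p k * Lmx R * Xmx (Zk p Z k.+1))
    & Xmx Z * ((-1) ^+ p *: Fmx R p ^+ p.-1) * Xmx Z
      = Xmx (Z1 p Z) * RYprod R p (p - 2) * Rmx R * Xmx (Zlast p Z)].
Proof.
split.
- have := midlem R p hp Z 0 hp.
  by rewrite expr0 scale1r expr1 /RYprod big_geq // mulr1.
- move=> [|k] hk1 hk2 //=.
  by apply: (midlem R p hp Z); lia.
- exact: (lastlem R p hp Z).
Qed.
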